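(* There is no lifting, with respect to the functor $\operatorname{Con}_c$, of the diagram $\mathcal D_c$ by a diagram of lattices and lattice homomorphisms in which the three lattices $K_0,K_1,K_2$ corresponding to $S_0,S_1,S_2$ have permutable congruences.
   Context: Posets are viewed as categories (one morphism $p\to q$ iff $p\leq q$); a $P$-diagram in a category is a functor from $P$. $\operatorname{Con}_c$ is the functor sending a lattice $L$ to its $\{\vee,0\}$-semilattice of compact (finitely generated) congruences, and a lattice homomorphism $f\colon K\to L$ to the map sending a compact congruence $\alpha$ of $K$ to the congruence of $L$ generated by $\{(f(x),f(y)):(x,y)\in\alpha\}$. A $P$-diagram $\mathcal L$ of lattices and lattice homomorphisms lifts a $P$-diagram $\mathcal S$ of distributive $\{\vee,0\}$-semilattices if $\operatorname{Con}_c\circ\mathcal L$ and $\mathcal S$ are naturally isomorphic. The diagram $\mathcal D_c$ is indexed by the cube $\mathcal P(\{0,1,2\})$ ordered by inclusion. Let $U=\mathcal P(\{0,1,2,3,4\})$ with union as join and $\varnothing$ as zero. Put $\xi_0=\{0,4\},\xi_1=\{3\},\xi_2=\{2\},\xi_3=\{1,4\}$; $\eta_0=\{0,4\},\eta_1=\{1,4\},\eta_2=\{2\},\eta_3=\{3,4\}$; $\zeta_0=\{0,4\},\zeta_1=\{1\},\zeta_2=\{3\},\zeta_3=\{2,4\}$; $\alpha_0=\{0,1,4\},\beta_0=\{2,3,4\}$; $\alpha_1=\{0,3,4\},\beta_1=\{1,2,4\}$; $\alpha_2=\{0,2,4\},\beta_2=\{1,3,4\}$. Let $T_0$ (resp.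 $T_1$, $T_2$) be the $\{\vee,0\}$-subsemilattice of $U$ generated by the $\xi_j$ (resp. $\eta_j$, $\zeta_j$), $j<4$; let $S_i$ ($i<3$) be the $\{\vee,0\}$-subsemilattice generated by $\{\alpha_i,\beta_i\}$; let $\mathbf 2=\{\varnothing,\{0,1,2,3,4\}\}$. Then $\mathcal D_c$ assigns $\mathbf 2$ to $\varnothing$, $S_i$ to $\{i\}$, $T_j$ to $\{0,1,2\}\setminus\{j\}$, $U$ to $\{0,1,2\}$, and all maps are inclusions (note $\mathbf 2\subseteq S_i\subseteq T_j\subseteq U$ for $i\neq j$). *)

(* Defs.v *)
From HB Require Import structures.
From mathcomp Require Import all_boot all_order.
Set Implicit Arguments. Unset Strict Implicit. Unset Printing Implicit Defensive.
Import Order.TTheory.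

Section Congruences.
Variables (d : Order.disp_t) (T : latticeType d).

Definition is_congruence (th : T -> T -> Prop) : Prop :=
  [/\ (forall x, th x x),
      (forall x y, th x y -> th y x),
      (forall x y z, th x y -> th y z -> th x z) &
      (forall x y x' y', th x x' -> th y y' ->
         th (Order.meet x y) (Order.meet x' y') /\
         th (Order.join x y) (Order.join x' y'))].

Definition Cg (R : T -> T -> Prop) : T -> T -> Prop :=
  fun x y => forall C, is_congruence C -> (forall u v, R u v -> C u v) -> C x y.

Definition compact_con (th : T -> T -> Prop) : Prop :=
  exists s : seq (T * T), th = Cg (fun u v => (u, v) \in s).

Definition con_zero : T -> T -> Prop := fun x y => x = y.
Definition con_join (th eta : T -> T -> Prop) : T -> T -> Prop :=
  Cg (fun x y => th x y \/ eta x y).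

Definition permutable_congruences : Prop :=
  forall a b : T -> T -> Prop, is_congruence a -> is_congruence b ->
    forall x y, (exists z, a x z /\ b z y) <-> (exists z, b x z /\ a z y).
End Congruences.

Definition con_map (d d' : Order.disp_t) (K : latticeType d) (L : latticeType d')
  (f : K -> L) (th : K -> K -> Prop) : L -> L -> Prop :=
  Cg (fun u v => exists x y, th x y /\ u = f x /\ v = f y).

Definition lattice_hom (d d' : Order.disp_t) (K : latticeType d) (L : latticeType d')
  (f : K -> L) : Prop :=
  forall x y, f (Order.meet x y) = Order.meet (f x) (f y) /\
              f (Order.join x y) = Order.join (f x) (f y).

Definition s5 (l : seq nat) : {set 'I_5} := [set x : 'I_5 | nat_of_ord x \in l].

(* {\/,0}-subsemilattice of U generated by G: all finite unions *)
Definition span (G : {set {set 'I_5}}) : {set {set 'I_5}} :=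
  [set \bigcup_(X in A) X | A : {set {set 'I_5}} in powerset G].

Definition gS (i : 'I_3) : {set {set 'I_5}} :=
  match nat_of_ord i with
  | 0 => [set s5 [:: 0; 1; 4]; s5 [:: 2; 3; 4]]
  | 1 => [set s5 [:: 0; 3; 4]; s5 [:: 1; 2; 4]]
  | _ => [set s5 [:: 0; 2; 4]; s5 [:: 1; 3; 4]]
  end.

Definition gT (j : 'I_3) : {set {set 'I_5}} :=
  match nat_of_ord j with
  | 0 => [set s5 [:: 0; 4]; s5 [:: 3]; s5 [:: 2]; s5 [:: 1; 4]]
  | 1 => [set s5 [:: 0; 4]; s5 [:: 1; 4]; s5 [:: 2]; s5 [:: 3; 4]]
  | _ => [set s5 [:: 0; 4]; s5 [:: 1]; s5 [:: 3]; s5 [:: 2; 4]]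
  end.

(* D_c p, as a subset of U (all maps of D_c are inclusions) *)
Definition DC (p : {set 'I_3}) : {set {set 'I_5}} :=
  if p == set0 then [set set0; setT]
  else if p == setT then setT
  else if #|p| == 1 then span (\bigcup_(i in p) gS i)   (* S_i, p = {i} *)
  else span (\bigcup_(j in ~: p) gT j).                 (* T_j, p = {0,1,2}\{j} *)

(* Main.v *)
From Stdlib Require Import FunctionalExtensionality PropExtensionality Classical.
Require Import Defs.
From HB Require Import structures.
From mathcomp Require Import all_boot all_order.
Set Implicit Arguments. Unset Strict Implicit. Unset Printing Implicit Defensive.

Section Gen.
Context {d : Order.disp_t} {T : latticeType d}.
Implicit Types (R C th eta : T -> T -> Prop).

Lemma releq (r s : T -> T -> Prop) : (forall x y, r x y <-> s x y) -> r = s.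
Proof.
move=> H; apply: functional_extensionality => x; apply: functional_extensionality => y.
by apply: propositional_extensionality; exact: H.
Qed.

Lemma Cg_gen R x y : R x y -> Cg R x y.
Proof. by move=> Rxy C _ /(_ x y Rxy). Qed.

Lemma Cg_min R C : is_congruence C -> (forall u v, R u v -> C u v) ->
  forall x y, Cg R x y -> C x y.
Proof. by move=> HC HR x y /(_ C HC HR). Qed.

Lemma Cg_cong R : is_congruence (Cg R).
Proof.
split.
- by move=> x C [r _ _ _] _.
- by move=> x y H C HC HR; case: (HC) => _ s _ _; apply: s; apply: H.
- by move=> x y z H1 H2 C HC HR; case: (HC) => _ _ t _; apply: (t _ y); [apply: H1|apply: H2].
- move=> x y x' y' H1 H2; split=> C HC HR; case: (HC) => _ _ _ c;
  by have [] := c x y x' y' (H1 C HC HR) (H2 C HC HR).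
Qed.

Lemma compact_cong th : compact_con th -> is_congruence th.
Proof. by move=> [s ->]; exact: Cg_cong. Qed.

Lemma zero_cong : @is_congruence d T (@con_zero _ T).
Proof.
rewrite /con_zero; split.
- by [].
- by move=> x y ->.
- by move=> x y z -> ->.
- by move=> x y x' y' -> ->.
Qed.

Lemma zero_compact : @compact_con d T (@con_zero _ T).
Proof.
exists [::]; apply: releq => x y; split.
- by move=> ->; case: (Cg_cong (fun u v => (u, v) \in [::])) => r _ _ _; apply: r.
- by apply: (Cg_min zero_cong) => u v; rewrite in_nil.
Qed.

Lemma join_compact th eta : compact_con th -> compact_con eta -> compact_con (con_join th eta).
Proof.
move=> [s ->] [t ->]; exists (s ++ t); apply: releq => x y; split.
- apply: Cg_min (Cg_cong _) _ _ _ => u v [] h.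
  + by apply: Cg_min (Cg_cong _) _ _ _ h => a b ab; apply: Cg_gen; rewrite mem_cat ab.
  + by apply: Cg_min (Cg_cong _) _ _ _ h => a b ab; apply: Cg_gen; rewrite mem_cat ab orbT.
- apply: Cg_min (Cg_cong _) _ _ _ => u v; rewrite mem_cat => /orP [] h; apply: Cg_gen;
  [left|right]; exact: Cg_gen.
Qed.

Definition Theta (x y : T) := Cg (fun u v => (u, v) \in [:: (x, y)]).

Lemma Theta_compact x y : compact_con (Theta x y).
Proof. by exists [:: (x, y)]. Qed.

Lemma Theta_self x y : Theta x y x y.
Proof. by apply: Cg_gen; rewrite mem_seq1. Qed.

Lemma Theta_min C x y : is_congruence C -> C x y -> forall u v, Theta x y u v -> C u v.
Proof.
move=> HC Cxy; apply: Cg_min HC _ => u v; rewrite mem_seq1 => /eqP [-> ->]; exact: Cxy.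
Qed.
End Gen.

Section Hom.
Context {d d' : Order.disp_t} {K : latticeType d} {L : latticeType d'} {f : K -> L}.
Hypothesis hf : lattice_hom f.

Lemma con_map_Theta x y : con_map f (Theta x y) = Theta (f x) (f y).
Proof.
apply: releq => s t; split.
- apply: Cg_min (Cg_cong _) _ _ _ => s' t' [a [b [Hab [-> ->]]]].
  have PC : is_congruence (fun a b => Theta (f x) (f y) (f a) (f b)).
    case: (Cg_cong (fun u v => (u, v) \in [:: (f x, f y)])) => r sy tr co.
    split.
    + by move=> a1; apply: r.
    + by move=> a1 b1; apply: sy.
    + by move=> a1 b1 c1; apply: tr.
    + by move=> a1 b1 a2 b2 h1 h2; have [hh1 hh2] := hf a1 b1; have [hh3 hh4] := hf a2 b2;
        rewrite hh1 hh2 hh3 hh4; apply: co.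
  have H := Theta_min PC (@Theta_self _ _ (f x) (f y)) Hab.
  exact: H.
- move=> H; apply: (Theta_min (@Cg_cong _ _ (fun u v => exists a b, Theta x y a b /\ u = f a /\ v = f b)) _ H).
  by apply: Cg_gen; exists x, y; split=> //; exact: Theta_self.
Qed.
End Hom.

Definition o0 : 'I_3 := @Ordinal 3 0 isT.
Definition o1 : 'I_3 := @Ordinal 3 1 isT.
Definition o2 : 'I_3 := @Ordinal 3 2 isT.
Definition t0 : 'I_5 := @Ordinal 5 0 isT.
Definition t1 : 'I_5 := @Ordinal 5 1 isT.
Definition t2 : 'I_5 := @Ordinal 5 2 isT.
Definition t4 : 'I_5 := @Ordinal 5 4 isT.

Lemma DC0 : DC set0 = [set set0; setT].
Proof. by rewrite /DC eqxx. Qed.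

Lemma setT3_neq0 : ([set: 'I_3] == set0) = false.
Proof. by apply/negbTE/set0Pn; exists o0. Qed.

Lemma DCT : DC setT = setT.
Proof. by rewrite /DC setT3_neq0 eqxx. Qed.

Lemma DC1 i : DC [set i] = span (gS i).
Proof.
rewrite /DC.
have -> : ([set i] == set0) = false by apply/negbTE/set0Pn; exists i; rewrite inE.
rewrite cards1 eqxx big_set1.
have -> : ([set i] == setT) = false.
  apply/negbTE/eqP => E; have := cards1 i; rewrite E cardsT card_ord //.
by [].
Qed.

Lemma DC2 j : DC (~: [set j]) = span (gT j).
Proof.
have c2 : #|~: [set j]| = 2 by rewrite cardsC1 card_ord.
rewrite /DC c2 setCK big_set1 /=.
have -> : (~: [set j] == set0) = false.
  by apply/negbTE/eqP => E; move: c2; rewrite E cards0.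
have -> : (~: [set j] == setT) = false.
  by apply/negbTE/eqP => E; move: c2; rewrite E cardsT card_ord.
by [].
Qed.

Lemma span_in (G : {set {set 'I_5}}) Y : Y \in G -> Y \in span G.
Proof.
move=> YG; rewrite /span.
have -> : Y = \bigcup_(X in [set Y]) X by rewrite big_set1.
by apply: imset_f; rewrite powersetE sub1set.
Qed.

Lemma span_sub (G : {set {set 'I_5}}) X k : X \in span G -> k \in X ->
  exists2 Y, Y \in G & (k \in Y) && (Y \subset X).
Proof.
case/imsetP => A; rewrite powersetE => AG -> /bigcupP [Y YA kY].
exists Y; first exact: (subsetP AG).
by rewrite kY; apply: bigcup_sup.
Qed.

Lemma in4 (T : finType) (a b c e Y : T) : Y \in [set a; b; c; e] -> [\/ Y = a, Y = b, Y = c | Y = e].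
Proof.
rewrite !inE; case: (eqVneq Y a) => [->|_]; first by constructor.
case: (eqVneq Y b) => [->|_]; first by constructor.
case: (eqVneq Y c) => [->|_]; first by constructor.
by move=> /eqP ->; constructor.
Qed.

Lemma S0 X : X \in span (gT o0) -> t0 \notin X -> t1 \notin X -> t4 \notin X.
Proof.
move=> XS n0 n1; apply/negP => x4; have [Y] := span_sub XS x4.
rewrite /gT /= => /in4 [] -> /andP [Y4 YX]; move: Y4; rewrite /s5 inE //= => _.
- by move: n0; rewrite (subsetP YX) // inE.
- by move: n1; rewrite (subsetP YX) // inE.
Qed.

Lemma S2 X : X \in span (gT o2) -> t0 \notin X -> t2 \notin X -> t4 \notin X.
Proof.
move=> XS n0 n1; apply/negP => x4; have [Y] := span_sub XS x4.
rewrite /gT /= => /in4 [] -> /andP [Y4 YX]; move: Y4; rewrite /s5 inE //= => _.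
- by move: n0; rewrite (subsetP YX) // inE.
- by move: n1; rewrite (subsetP YX) // inE.
Qed.

Lemma S1 X : X \in span (gT o1) -> t4 \notin X -> t1 \notin X.
Proof.
move=> XS n4; apply/negP => x1; have [Y] := span_sub XS x1.
rewrite /gT /= => /in4 [] -> /andP [Y4 YX]; move: Y4; rewrite /s5 inE //= => _.
by move: n4; rewrite (subsetP YX) // inE.
Qed.

Section Main.
Unset Implicit Arguments.
Variables (d : {set 'I_3} -> Order.disp_t)
  (L : forall p : {set 'I_3}, latticeType (d p))
  (f : forall p q : {set 'I_3}, L p -> L q)
  (phi : forall p : {set 'I_3}, (L p -> L p -> Prop) -> {set 'I_5}).
Set Implicit Arguments.
Hypothesis Hhom : forall p q : {set 'I_3}, p \subset q -> lattice_hom (f p q).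
Hypothesis Hcomp : forall (p q r : {set 'I_3}) (x : L p), p \subset q -> q \subset r ->
      f p r x = f q r (f p q x).
Hypothesis Hin : forall (p : {set 'I_3}) th, compact_con th -> phi p th \in DC p.
Hypothesis Hinj : forall (p : {set 'I_3}) th eta, compact_con th -> compact_con eta ->
      phi p th = phi p eta -> th = eta.
Hypothesis Hsurj : forall (p : {set 'I_3}) X, X \in DC p -> exists th, compact_con th /\ phi p th = X.
Hypothesis Hzero : forall p : {set 'I_3}, phi p (@con_zero _ (L p)) = set0.
Hypothesis Hjoin : forall (p : {set 'I_3}) th eta, compact_con th -> compact_con eta ->
      phi p (con_join th eta) = phi p th :|: phi p eta.
Hypothesis Hnat : forall (p q : {set 'I_3}) th, p \subset q -> compact_con th ->
      phi q (con_map (f p q) th) = phi p th.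
Hypothesis Hperm : forall i : 'I_3, permutable_congruences (L [set i]).

Lemma mono p (th eta : L p -> L p -> Prop) : compact_con th -> compact_con eta ->
  (forall x y, th x y -> eta x y) -> phi p th \subset phi p eta.
Proof.
move=> ct ce sub.
have E : con_join th eta = eta.
  apply: releq => x y; split.
  - by apply: (Cg_min (compact_cong ce)) => u v [] //; apply: sub.
  - by move=> h; apply: Cg_gen; right.
have := Hjoin ct ce; rewrite E => ->; exact: subsetUl.
Qed.

Lemma key p (eta Psi : L p -> L p -> Prop) k : compact_con eta -> compact_con Psi ->
  phi p Psi = ~: [set k] -> k \notin phi p eta -> forall x y, eta x y -> Psi x y.
Proof.
move=> ce cP hP nk x y h.
have E : con_join eta Psi = Psi.
  apply: Hinj => //; first exact: join_compact.
  rewrite Hjoin // hP; apply/setUidPr/subsetP => z zin; rewrite !inE.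
  by apply/eqP => zk; move: nk; rewrite -zk zin.
by rewrite -E; apply: Cg_gen; left.
Qed.

Definition Delta p (x y : L p) := phi p (Theta x y).

Lemma Dnat (p q : {set 'I_3}) (x y : L p) : p \subset q -> Delta (f p q x) (f p q y) = Delta x y.
Proof.
move=> pq; rewrite /Delta -con_map_Theta; last exact: Hhom.
by apply: Hnat => //; exact: (Theta_compact _ _).
Qed.

Lemma Dk k (Psi : L setT -> L setT -> Prop) : compact_con Psi -> phi setT Psi = ~: [set k] ->
  forall x y, Psi x y <-> k \notin Delta x y.
Proof.
move=> cP hP x y; split.
- move=> h; have := mono (Theta_compact _ _) cP (Theta_min (compact_cong cP) h).
  by rewrite hP => /subsetP /(_ k) H; apply/negP => /H; rewrite !inE eqxx.
- by move=> nk; apply: (key (Theta_compact _ _) cP hP nk); exact: Theta_self.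
Qed.

Lemma decomp i aS bS : aS \in DC [set i] -> bS \in DC [set i] -> aS :|: bS = setT ->
  forall x y : L [set i], Delta x y = setT ->
  exists z, Delta x z \subset aS /\ Delta z y \subset bS.
Proof.
move=> ha hb hab x y hxy.
have [al [ca pa]] := Hsurj ha; have [be [cb pb]] := Hsurj hb.
have cj := join_compact ca cb.
have J : Theta x y = con_join al be.
  by apply: Hinj => //; [exact: (Theta_compact _ _) | rewrite Hjoin // pa pb hab].
have Jxy : con_join al be x y by rewrite -J; exact: Theta_self.
have [ra sa ta coa] := compact_cong ca; have [rb sb tb cob] := compact_cong cb.
pose rho := fun a b => exists z, al a z /\ be z b.
have rhoC : is_congruence rho.
  split.
  - by move=> a; exists a.
  - move=> a b [z [h1 h2]].
    by apply/(Hperm (compact_cong ca) (compact_cong cb)); exists z; split; [apply: sb|apply: sa].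
  - move=> a b c [z1 [h1 h2]] [z2 [h3 h4]].
    have [z3 [h5 h6]] : exists z, al z1 z /\ be z z2.
      by apply/(Hperm (compact_cong ca) (compact_cong cb)); exists b.
    by exists z3; split; [apply: ta h5 | apply: tb h4].
  - move=> a b a' b' [z1 [h1 h2]] [z2 [h3 h4]]; split.
    + by exists (Order.meet z1 z2); split; [have [] := coa _ _ _ _ h1 h3 | have [] := cob _ _ _ _ h2 h4].
    + by exists (Order.join z1 z2); split; [have [] := coa _ _ _ _ h1 h3 | have [] := cob _ _ _ _ h2 h4].
have [z [h1 h2]] : rho x y.
  move: Jxy; apply: (Cg_min rhoC) => u v [] h; [by exists v | by exists u].
exists z; split.
- rewrite -pa; apply: (mono (Theta_compact _ _) ca); exact: (Theta_min (compact_cong ca) h1).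
- rewrite -pb; apply: (mono (Theta_compact _ _) cb); exact: (Theta_min (compact_cong cb) h2).
Qed.


Lemma step (u v : L set0) i aS bS : aS \in DC [set i] -> bS \in DC [set i] -> aS :|: bS = setT ->
  Delta u v = setT ->
  exists z : L [set i], Delta (f set0 setT u) (f [set i] setT z) \subset aS /\
                        Delta (f [set i] setT z) (f set0 setT v) \subset bS.
Proof.
move=> ha hb hab huv.
have [z [h1 h2]] := decomp ha hb hab (x := f set0 [set i] u) (y := f set0 [set i] v)
   (ltac:(by rewrite Dnat ?sub0set)).
exists z.
rewrite (Hcomp u (sub0set [set i]) (subsetT [set i])) (Hcomp v (sub0set [set i]) (subsetT [set i])).
by rewrite !Dnat ?subsetT.
Qed.

Lemma pairD j i i' (z : L [set i]) (z' : L [set i']) : i != j -> i' != j ->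
  Delta (f [set i] setT z) (f [set i'] setT z') \in span (gT j).
Proof.
move=> ij i'j.
have s1 : [set i] \subset ~: [set j] by rewrite sub1set !inE.
have s2 : [set i'] \subset ~: [set j] by rewrite sub1set !inE.
rewrite (Hcomp z s1 (subsetT _)) (Hcomp z' s2 (subsetT _)) Dnat ?subsetT // -DC2.
exact: Hin (Theta_compact _ _).
Qed.

Lemma notD (p : {set 'I_3}) (x y : L p) (S : {set 'I_5}) (k : 'I_5) : Delta x y \subset S -> k \notin S -> k \notin Delta x y.
Proof. by move=> h; apply: contra; apply: (subsetP h). Qed.

Lemma main : False.
Proof.
have [u [v uv]] : exists u v : L set0, u <> v.
  apply: NNPP => H.
  have [th [cth pth]] := @Hsurj set0 setT (ltac:(by rewrite DC0 !inE eqxx orbT)).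
  have E : th = @con_zero _ (L set0).
    apply: releq => x y; split => [_|->].
    - by apply: NNPP => nxy; apply: H; exists x, y.
    - by case: (compact_cong cth).
  by have := Hzero set0; rewrite -E pth => /setP /(_ t0); rewrite !inE.
have Duv : Delta u v = setT.
  have := Hin (Theta_compact u v); rewrite DC0 !inE => /orP [] /eqP // h0.
  exfalso; apply: uv.
  have E : Theta u v = @con_zero _ (L set0).
    by apply: Hinj; [exact: Theta_compact | exact: zero_compact | rewrite Hzero].
  by have := @Theta_self _ _ u v; rewrite E.
set A := f set0 setT u; set B := f set0 setT v.
have DAB : Delta A B = setT by rewrite Dnat ?sub0set.
have PsiE k : exists Psi, compact_con Psi /\ phi setT Psi = ~: [set k].
  by apply: Hsurj; rewrite DCT inE.
have [P0 [c0 hp0]] := PsiE t0.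
have [P1 [c1 hp1]] := PsiE t1.
have [P2 [c2 hp2]] := PsiE t2.
have [P4 [c4 hp4]] := PsiE t4.
have [r0 s0 tr0 _] := compact_cong c0.
have [r1 s1 tr1 _] := compact_cong c1.
have [r2 s2 tr2 _] := compact_cong c2.
have [r4 s4 tr4 _] := compact_cong c4.
have D0 := Dk c0 hp0; have D1 := Dk c1 hp1; have D2 := Dk c2 hp2; have D4 := Dk c4 hp4.
have nAB : ~ P1 A B by move/D1; rewrite DAB inE.
have [z0 [a0 b0]] := @step u v o0 (s5 [:: 0; 1; 4]) (s5 [:: 2; 3; 4])
  (ltac:(by rewrite DC1; apply: span_in; rewrite /gS /= !inE eqxx))
  (ltac:(by rewrite DC1; apply: span_in; rewrite /gS /= !inE eqxx orbT))
  (ltac:(by apply/setP => -[[|[|[|[|[|k]]]]] hk]; rewrite !inE //=)) Duv.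
have [z1 [a1 b1]] := @step u v o1 (s5 [:: 0; 3; 4]) (s5 [:: 1; 2; 4])
  (ltac:(by rewrite DC1; apply: span_in; rewrite /gS /= !inE eqxx))
  (ltac:(by rewrite DC1; apply: span_in; rewrite /gS /= !inE eqxx orbT))
  (ltac:(by apply/setP => -[[|[|[|[|[|k]]]]] hk]; rewrite !inE //=)) Duv.
have [z2 [a2 b2]] := @step u v o2 (s5 [:: 0; 2; 4]) (s5 [:: 1; 3; 4])
  (ltac:(by rewrite DC1; apply: span_in; rewrite /gS /= !inE eqxx))
  (ltac:(by rewrite DC1; apply: span_in; rewrite /gS /= !inE eqxx orbT))
  (ltac:(by apply/setP => -[[|[|[|[|[|k]]]]] hk]; rewrite !inE //=)) Duv.
set C0 := f [set o0] setT z0 in a0 b0.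
set C1 := f [set o1] setT z1 in a1 b1.
set C2 := f [set o2] setT z2 in a2 b2.
have h0C1B : P0 C1 B by apply/D0; apply: notD b1 _; rewrite /s5 inE.
have h0C2B : P0 C2 B by apply/D0; apply: notD b2 _; rewrite /s5 inE.
have h0C0B : P0 C0 B by apply/D0; apply: notD b0 _; rewrite /s5 inE.
have h1AC1 : P1 A C1 by apply/D1; apply: notD a1 _; rewrite /s5 inE.
have h1AC2 : P1 A C2 by apply/D1; apply: notD a2 _; rewrite /s5 inE.
have h1C0B : P1 C0 B by apply/D1; apply: notD b0 _; rewrite /s5 inE.
have h2AC0 : P2 A C0 by apply/D2; apply: notD a0 _; rewrite /s5 inE.
have h2AC1 : P2 A C1 by apply/D2; apply: notD a1 _; rewrite /s5 inE.
have h4C1C2 : P4 C1 C2.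
  apply/D4; apply: (S0 (pairD (j:=o0) z1 z2 isT isT)).
  - by apply/D0; exact: (tr0 _ _ _ h0C1B (s0 _ _ h0C2B)).
  - by apply/D1; exact: (tr1 _ _ _ (s1 _ _ h1AC1) h1AC2).
have h4C0C1 : P4 C0 C1.
  apply/D4; apply: (S2 (pairD (j:=o2) z0 z1 isT isT)).
  - by apply/D0; exact: (tr0 _ _ _ h0C0B (s0 _ _ h0C1B)).
  - by apply/D2; exact: (tr2 _ _ _ (s2 _ _ h2AC0) h2AC1).
have h4C0C2 : P4 C0 C2 by exact: (tr4 _ _ _ h4C0C1 h4C1C2).
have h1C0C2 : P1 C0 C2.
  by apply/D1; apply: (S1 (pairD (j:=o1) z0 z2 isT isT)); apply/D4.
apply: nAB; exact: (tr1 _ _ _ h1AC2 (tr1 _ _ _ (s1 _ _ h1C0C2) h1C0B)).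
Qed.
End Main.

Unset Implicit Arguments.
Set Strict Implicit.

Theorem theorem4p1
  (d : {set 'I_3} -> Order.disp_t)
  (L : forall p : {set 'I_3}, latticeType (d p))
  (f : forall p q : {set 'I_3}, L p -> L q)
  (phi : forall p : {set 'I_3}, (L p -> L p -> Prop) -> {set 'I_5}) :
  (* L is a cube-diagram of lattices and lattice homomorphisms *)
  (forall p q : {set 'I_3}, p \subset q -> lattice_hom (f p q)) ->
  (forall (p : {set 'I_3}) (x : L p), f p p x = x) ->
  (forall (p q r : {set 'I_3}) (x : L p), p \subset q -> q \subset r ->
      f p r x = f q r (f p q x)) ->
  (* phi is a natural isomorphism Con_c o L ~= D_c of {\/,0}-semilattices *)
  (forall (p : {set 'I_3}) th, compact_con th -> phi p th \in DC p) ->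
  (forall (p : {set 'I_3}) th eta, compact_con th -> compact_con eta ->
      phi p th = phi p eta -> th = eta) ->
  (forall (p : {set 'I_3}) X, X \in DC p -> exists th, compact_con th /\ phi p th = X) ->
  (forall p : {set 'I_3}, phi p (@con_zero _ (L p)) = set0) ->
  (forall (p : {set 'I_3}) th eta, compact_con th -> compact_con eta ->
      phi p (con_join th eta) = phi p th :|: phi p eta) ->
  (forall (p q : {set 'I_3}) th, p \subset q -> compact_con th ->
      phi q (con_map (f p q) th) = phi p th) ->
  (* K_0, K_1, K_2 have permutable congruences *)
  (forall i : 'I_3, permutable_congruences (L [set i])) ->
  False.
Proof.
move=> Hhom _ Hcomp Hin Hinj Hsurj Hzero Hjoin Hnat Hperm.
exact: (main Hhom Hcomp Hin Hinj Hsurj Hzero Hjoin Hnat Hperm).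
Qed.
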